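(* Let $X$ and $Y$ be non-negative random variables with absolutely continuous distribution functions $F$ and $G$ (survival functions $\bar F=1-F$, $\bar G=1-G$), and let $\alpha,\beta>0$. Define $$R_{\alpha,\beta}(\bar F,\bar G,t)=\int_t^\infty\left(\frac{\bar F(x)}{\bar F(t)}\right)^{\alpha}\left(\frac{\bar G(x)}{\bar G(t)}\right)^{\beta}dx,\quad t\ge0.$$ If $R_{\alpha,\beta}(\bar F,\bar G,t)=c$ for all $t\ge 0$, where $c$ is a positive constant, then $F$ is an exponential distribution if and only if $G$ is an exponential distribution.
   Context: $R_{\alpha,\beta}(\bar F,\bar G,t)$ is the dynamic relative cumulative residual information measure between the residual lives $(X-t\mid X>t)$ and $(Y-t\mid Y>t)$. *)

(* Defs.v *)
From HB Require Import structures.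
From mathcomp Require Import all_boot all_order all_algebra.
From mathcomp Require Import all_classical all_reals all_analysis.
Set Implicit Arguments. Unset Strict Implicit. Unset Printing Implicit Defensive.
Import Order.TTheory GRing.Theory Num.Theory.
Local Open Scope classical_set_scope.
Local Open Scope ring_scope.

Definition nonneg_abs_cont_cdf {R : realType} (F : R -> R) : Prop :=
  (exists f : R -> R,
      measurable_fun setT f /\ (forall x, 0 <= f x) /\
      ((\int[@lebesgue_measure R]_(y in setT) (f y)%:E)%E = 1%E) /\
      (forall x, (F x)%:E = (\int[@lebesgue_measure R]_(y in `]-oo, x]) (f y)%:E)%E))
  /\ (forall x, x < 0 -> F x = 0).

Definition survival {R : realType} (F : R -> R) : R -> R := fun x => 1 - F x.

Definition is_exponential_cdf {R : realType} (F : R -> R) : Prop :=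
  exists lambda : R, 0 < lambda /\
    forall x, F x = if x < 0 then 0 else 1 - expR (- (lambda * x)).

Definition Rab {R : realType} (a b : R) (Fb Gb : R -> R) (t : R) : \bar R :=
  (\int[@lebesgue_measure R]_(x in `[t, +oo[)
     ((powR (Fb x / Fb t) a) * (powR (Gb x / Gb t) b))%:E)%E.

(* Main.v *)
Require Import Defs.
From HB Require Import structures.
From mathcomp Require Import all_boot all_order all_algebra.
From mathcomp Require Import all_classical all_reals all_analysis.
From mathcomp Require Import ring lra measurable_realfun.
Import Order.TTheory GRing.Theory Num.Theory.
Local Open Scope ring_scope.

Section S.
Local Open Scope classical_set_scope.
Context {R : realType}.
Local Notation mu := (@lebesgue_measure R).

Lemma step_bound (Hs Ht x : R) : 0 <= Ht <= 1 -> 0 <= Hs <= 1 -> 0 <= x <= 1/2 ->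
  Ht * x <= Hs - Ht <= Hs * x -> `|expR x * Ht - Hs| <= 2 * x ^+ 2.
Proof.
move=> /andP[Ht0 Ht1] /andP[Hs0 Hs1] /andP[x0 x2] /andP[l u].
have E1 : 1 + x <= expR x := expR_ge1Dx x.
have E2 : expR x * (1 - x) <= 1.
  have := expR_ge1Dx (- x); rewrite expRN => h.
  have ep : 0 < expR x := expR_gt0 x.
  have : expR x * (1 + - x) <= expR x * (expR x)^-1 by rewrite ler_pM2l.
  by rewrite mulfV ?gt_eqF.
have E3 : expR x <= 2 by nra.
rewrite ler_norml; apply/andP; split.
- have : Hs * (expR x * (1 - x) ) >= Hs * ((1 + x) * (1 - x)) by apply: ler_wpM2l => //; nra.
  nra.
- have : Ht * (expR x - 1 - x) <= Ht * (2 * x^+2) by apply: ler_wpM2l => //; nra.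
  nra.
Qed.

Lemma expo_char (H : R -> R) (c : R) : 0 < c -> (forall x, 0 <= x -> 0 <= H x <= 1) ->
  (forall s t, 0 <= s -> s <= t -> H t * (t - s) <= c * (H s - H t) <= H s * (t - s)) ->
  forall T, 0 <= T -> H T = H 0 * expR (- (T / c)).
Proof.
move=> c0 Hb Hi T T0.
pose K t := H t * expR (t / c).
have Kstep s x : 0 <= s -> 0 <= x <= 1/2 ->
    `|K (s + c * x) - K s| <= expR (s / c) * (2 * x ^+ 2).
  move=> s0 /andP[x0 x2].
  have cx0 : 0 <= c * x by rewrite mulr_ge0 // ltW.
  have -> : K (s + c * x) - K s = expR (s / c) * (expR x * H (s + c * x) - H s).
    rewrite /K mulrDl (mulrC c) mulfK ?gt_eqF // expRD; ring.
  rewrite normrM ger0_norm ?expR_ge0 // ler_wpM2l ?expR_ge0 //.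
  apply: step_bound; [apply: Hb; lra|exact: Hb|lra|].
  have /andP[h1 h2] := Hi s (s + c * x) s0 ltac:(by rewrite lerDl).
  have e : s + c * x - s = c * x by ring.
  rewrite e in h1 h2.
  apply/andP; split.
  - rewrite -(ler_pM2l c0); nra.
  - rewrite -(ler_pM2l c0); nra.
have Kind n x : 0 <= x <= 1/2 -> n%:R * (c * x) <= T -> forall k, (k <= n)%N ->
    `|K (k%:R * (c * x)) - K 0| <= k%:R * (expR (T / c) * (2 * x ^+ 2)).
  move=> /andP[x0 x2] nT; elim => [|k IH] kn.
    by rewrite !mul0r subrr normr0.
  have kn' : (k <= n)%N by apply: ltnW.
  have cx0 : 0 <= c * x by rewrite mulr_ge0 // ltW.
  have kT : k%:R * (c * x) <= T.
    apply: le_trans nT; apply: ler_wpM2r => //; rewrite ler_nat.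
    exact: kn'.
  have k0 : 0 <= k%:R * (c * x) by rewrite mulr_ge0.
  have := Kstep _ x k0 ltac:(lra).
  move=> h1.
  have eS (y : R) : k.+1%:R * y = k%:R * y + y by rewrite -addn1 natrD mulrDl mul1r.
  rewrite !eS.
  have h2 : expR (k%:R * (c * x) / c) <= expR (T / c).
    by rewrite ler_expR ler_pM2r ?invr_gt0.
  have h3 := IH kn'.
  have e : K (k%:R * (c * x) + c * x) - K 0 =
     (K (k%:R * (c * x) + c * x) - K (k%:R * (c * x))) + (K (k%:R * (c * x)) - K 0) by ring.
  rewrite e; apply: le_trans (ler_normD _ _) _.
  have : expR (k%:R * (c * x) / c) * (2 * x ^+ 2) <= expR (T / c) * (2 * x ^+ 2).
    by rewrite ler_wpM2r // mulr_ge0 // sqr_ge0.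
  lra.
suff KT : K T = K 0.
  move: KT; rewrite /K mul0r expR0 mulr1 => <-.
  by rewrite -mulrA -expRD subrr expR0 mulr1.
apply/eqP; rewrite -subr_eq0 -normr_eq0; apply/negPn/negP => dn0.
set d := `|K T - K 0|.
have d0 : 0 < d by rewrite lt_def dn0 normr_ge0.
set tau := T / c.
have tau0 : 0 <= tau by rewrite divr_ge0 // ltW.
set E := expR tau.
have E0 : 0 < E := expR_gt0 tau.
set q := 2 * E * tau ^+ 2 / d.
have q0 : 0 <= q.
  apply: divr_ge0; [apply: mulr_ge0; [apply: mulr_ge0; lra| exact: sqr_ge0] | lra].
have qd : q * d = 2 * E * tau ^+ 2 by rewrite /q mulfVK // gt_eqF.
set n := (Num.truncn (2 * tau + q)).+1.
have nbig : 2 * tau + q < n%:R by apply: truncnS_gt.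
set N := n%:R : R.
have N0 : 0 < N by lra.
set x := tau / N.
have xN : x * N = tau by rewrite /x mulfVK // gt_eqF.
have x0 : 0 <= x by rewrite divr_ge0 // ltW.
have x2 : x <= 1/2.
  rewrite /x ler_pdivrMr //; lra.
have NT : N * (c * x) = T.
  rewrite mulrCA (mulrC N) xN /tau mulrCA divff ?gt_eqF // mulr1 //.
have := Kind n x ltac:(lra) ltac:(rewrite NT) n (leqnn n).
rewrite NT -/d -/tau -/E => hd.
have : N * (E * (2 * x ^+ 2)) < d.
  have e1 : N * (E * (2 * x ^+ 2)) = 2 * E * tau * x by rewrite -xN; ring.
  rewrite e1.
  have : 2 * E * tau ^+ 2 < d * N.
    rewrite -qd; rewrite mulrC ltr_pM2l //; lra.
  move=> h.
  have -> : 2 * E * tau * x = (2 * E * tau ^+ 2) / N by rewrite -xN; field; lra.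
  by rewrite ltr_pdivrMr.
lra.
Qed.

Lemma int_union0 (f : R -> R) (S : (set R)^nat) : measurable_fun setT f ->
  (forall x, 0 <= f x) -> nondecreasing_seq S -> (forall n, measurable (S n)) ->
  (forall n, (\int[mu]_(x in S n) (f x)%:E = 0)%E) ->
  (\int[mu]_(x in \bigcup_n S n) (f x)%:E = 0)%E.
Proof.
move=> mf f0 nd mS h0.
have h : (\int[mu]_(x in S i) (f x)%:E @[i --> \oo] -->
           \int[mu]_(x in \bigcup_i S i) (f x)%:E)%E.
  apply: ge0_nondecreasing_set_cvg_integral => //.
    move=> i; apply/measurable_EFinP.
    exact: measurable_funS measurableT (@subsetT _ _) mf.
  by move=> i x _; rewrite lee_fin.
move: h; under eq_fun do rewrite h0.
move=> h; have := @cvg_lim _ (@ereal_hausdorff R) _ \oo _ _ _ h; move=> H2; rewrite -H2 ?lim_cst //; apply: Proper_dense_filter ; by [].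
Qed.

Lemma cdf_props (F : R -> R) : nonneg_abs_cont_cdf F ->
  [/\ forall x, 0 <= F x <= 1, {homo F : x y / x <= y}, F 0 = 0 &
      ((forall x, 0 <= x -> F x = 0) -> False)].
Proof.
case=> [[f [mf [f0 [f1 fF]]]] Fneg].
have mEf : measurable_fun setT (EFin \o f) by apply/measurable_EFinP.
have mEfD (D : set R) : measurable_fun D (EFin \o f).
  exact: measurable_funS measurableT (@subsetT _ _) mEf.
have Ef0 : forall x, (0 <= (f x)%:E)%E by move=> x; rewrite lee_fin.
split.
- move=> x; apply/andP; split.
    by rewrite -lee_fin fF; apply: integral_ge0 => y _.
  rewrite -lee_fin fF -f1; apply: ge0_subset_integral => //.
- move=> x y xy; rewrite -lee_fin !fF; apply: ge0_subset_integral => //.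
  - exact: mEfD.
  - by move=> z /=; rewrite !in_itv /= => /le_trans; apply.
- suff : ((F 0)%:E = 0)%E by case.
  rewrite fF -integral_itv_bndo_bndc; last exact: mEfD.
  have -> : `]-oo, 0[%classic = \bigcup_n `]-oo, - (n.+1%:R)^-1]%classic :> set R.
    apply/seteqP; split.
    - move=> x /=; rewrite in_itv /= => x0.
      exists (Num.truncn ((-x)^-1)) => //=; rewrite in_itv /=.
      have h := truncnS_gt ((-x)^-1).
      have : ((Num.truncn ((-x)^-1)).+1%:R)^-1 < -x.
        rewrite -[X in _ < X]invrK ltf_pV2 // posrE ?invr_gt0 ?oppr_gt0 ?ltr0n //.
      by move=> /ltW; rewrite lerNr.
    - move=> x [n _] /=; rewrite !in_itv /= => h.
      have : 0 < (n.+1%:R : R)^-1 by rewrite invr_gt0 ltr0n.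
      by move=> a0; apply: le_lt_trans h _; rewrite oppr_lt0.
  apply: int_union0 => //.
  - move=> m n mn; rewrite subsetEset => z /=; rewrite !in_itv /= => /le_trans; apply.
    by rewrite lerN2 lef_pV2 ?posrE ?ltr0n // ler_nat.
  - move=> n; rewrite -fF Fneg //.
- move=> Fz.
  have : (\int[mu]_(x in setT) (f x)%:E = 0)%E; last first.
    move=> h; move: f1; rewrite h; case => /eqP; by rewrite eq_sym oner_eq0.
  have -> : setT = \bigcup_n `]-oo, n%:R]%classic :> set R.
    apply/seteqP; split => x // _.
    exists (Num.truncn `|x|).+1 => //=; rewrite in_itv /=.
    have h := truncnS_gt `|x|.
    have := ler_norm x.
    lra.
  apply: int_union0 => //.
  - move=> m n mn; rewrite subsetEset => z /=; rewrite !in_itv /= => /le_trans; apply.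
    by rewrite ler_nat.
  - move=> n; rewrite -fF Fz //.
Qed.

End S.

Section S1.
Local Open Scope classical_set_scope.
Context {R : realType}.
Local Notation mu := (@lebesgue_measure R).

Lemma powRV' (v r : R) : 0 < v -> v^-1 `^ r = (v `^ r)^-1.
Proof.
move=> v0; rewrite /powR invr_eq0 gt_eqF // lnV ?posrE // mulrN expRN //.
Qed.

Lemma key (F G : R -> R) (a b c : R) :
  nonneg_abs_cont_cdf F -> nonneg_abs_cont_cdf G -> 0 < a -> 0 < b -> 0 < c ->
  (forall t, 0 <= t -> Rab a b (survival F) (survival G) t = c%:E) ->
  forall t, 0 <= t -> [/\ 0 < survival F t, 0 < survival G t &
    survival F t `^ a * survival G t `^ b = expR (- (t / c))].
Proof.
move=> hF hG a0 b0 c0 hR.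
have [F01 Fnd F00 _] := @cdf_props _ F hF.
have [G01 Gnd G00 _] := @cdf_props _ G hG.
set Fb := survival F; set Gb := survival G.
have Fb01 x : 0 <= Fb x <= 1 by have := F01 x; rewrite /Fb /survival; lra.
have Gb01 x : 0 <= Gb x <= 1 by have := G01 x; rewrite /Gb /survival; lra.
have Fbni x y : x <= y -> Fb y <= Fb x by move=> /Fnd; rewrite /Fb /survival; lra.
have Gbni x y : x <= y -> Gb y <= Gb x by move=> /Gnd; rewrite /Gb /survival; lra.
have Fbpos t : 0 <= t -> 0 < Fb t.
  move=> t0; have /andP[h0 _] := Fb01 t; rewrite lt_def h0 andbT; apply/eqP => Ft0.
  have := hR t t0; rewrite /Rab -/Fb -/Gb Ft0.
  under eq_integral => x _ do rewrite invr0 mulr0 powR0 ?gt_eqF // mul0r.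
  rewrite integral0 => /esym; case => /eqP; rewrite gt_eqF //.
have Gbpos t : 0 <= t -> 0 < Gb t.
  move=> t0; have /andP[h0 _] := Gb01 t; rewrite lt_def h0 andbT; apply/eqP => Gt0.
  have := hR t t0; rewrite /Rab -/Fb -/Gb Gt0.
  under eq_integral => x _ do rewrite invr0 mulr0 powR0 ?gt_eqF // mulr0.
  rewrite integral0 => /esym; case => /eqP; rewrite gt_eqF //.
pose H x := Fb x `^ a * Gb x `^ b.
have P1 (r : R) : 1 `^ r = 1 by rewrite powR1.
have pw1 (x r : R) : 0 <= x <= 1 -> 0 <= r -> x `^ r <= 1.
  move=> /andP[x0 x1] r0; rewrite -(P1 r); apply: ge0_ler_powR => //.
  by rewrite nnegrE.
have H01 x : 0 <= H x <= 1.
  apply/andP; split; first by rewrite mulr_ge0 // powR_ge0.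
  rewrite -[1]mulr1; apply: ler_pM; rewrite ?powR_ge0 //; apply: pw1 => //; exact: ltW.
have mono (u v r : R) : 0 <= u -> u <= v -> 0 <= r -> u `^ r <= v `^ r.
  move=> u0 uv r0; apply: ge0_ler_powR; rewrite ?nnegrE //; exact: le_trans uv.
have Hni : {homo H : x y / (x <= y)%O >-> (y <= x)%O}.
  move=> x y xy; rewrite /H; apply: ler_pM; rewrite ?powR_ge0 //; apply: mono.
  - by case/andP: (Fb01 y).
  - exact: Fbni.
  - exact: ltW.
  - by case/andP: (Gb01 y).
  - exact: Gbni.
  - exact: ltW.
have mH (D : set R) : measurable D -> measurable_fun D H.
  by move=> mD; apply: nonincreasing_measurable.
have mEH (D : set R) : measurable D -> measurable_fun D (EFin \o H).
  by move=> mD; apply/measurable_EFinP; exact: mH.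
have Hpos t : 0 <= t -> 0 < H t.
  by move=> t0; rewrite mulr_gt0 // powR_gt0 // ?Fbpos ?Gbpos.
have H0 : H 0 = 1.
  by rewrite /H /Fb /Gb /survival F00 G00 subr0 !P1 mulr1.
have HI t : 0 <= t -> (\int[mu]_(x in `[t, +oo[) (H x)%:E = (c * H t)%:E)%E.
  move=> t0; have := hR t t0; rewrite /Rab -/Fb -/Gb.
  have Ft := Fbpos t t0; have Gt := Gbpos t t0.
  have eqH x : (Fb x / Fb t) `^ a * (Gb x / Gb t) `^ b = (H t)^-1 * H x.
    have /andP[fx _] := Fb01 x; have /andP[gx _] := Gb01 x.
    rewrite powRM ?invr_ge0 ?(ltW Ft) // powRM ?invr_ge0 ?(ltW Gt) //.
    rewrite !powRV' // /H invfM; ring.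
  under eq_integral => x _ do rewrite eqH EFinM.
  rewrite ge0_integralZl_EFin //; last 3 first.
  - by move=> x _; rewrite lee_fin; case/andP: (H01 x).
  - exact: mEH.
  - by rewrite invr_ge0 ltW // Hpos.
  move=> h; have := congr1 (fun z => (H t)%:E * z)%E h.
  rewrite muleA -EFinM divff ?gt_eqF ?Hpos // mul1e => ->.
  by rewrite -EFinM mulrC.
have Hineq s t : 0 <= s -> s <= t ->
    H t * (t - s) <= c * (H s - H t) <= H s * (t - s).
  move=> s0 st; have t0 : 0 <= t := le_trans s0 st.
  have spl : `[s, +oo[%classic = `[s, t[%classic `|` `[t, +oo[%classic :> set R.
    by apply: itv_bndbnd_setU; rewrite bnd_simp.
  have dis : [disjoint `[s, t[%classic & `[t, +oo[%classic :> set R].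
    rewrite disj_set2E; apply/eqP/seteqP; split => z //=.
    rewrite !in_itv /= andbT => -[/andP[_ zt] tz].
    by move: (lt_le_trans zt tz); rewrite ltxx.
  have e := HI s s0.
  rewrite spl ge0_integral_setU // in e; last 2 first.
  - by rewrite -spl; exact: mEH.
  - by move=> x _; rewrite lee_fin; case/andP: (H01 x).
  rewrite (HI t t0) in e.
  have mst : mu `[s, t[%classic = (t - s)%:E.
    rewrite lebesgue_measure_itv /= lte_fin.
    have [st1|ts] := ltP s t; first by rewrite EFinB.
    have -> : t = s by apply: le_anti; rewrite ts st.
    by rewrite subrr.
  have lo : ((H t * (t - s))%:E <= \int[mu]_(x in `[s, t[) (H x)%:E)%E.
    rewrite EFinM -mst -integral_cst //; apply: ge0_le_integral => //.
    - by move=> x _; rewrite lee_fin; case/andP: (H01 t).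
    - exact: mEH.
    - move=> x /=; rewrite in_itv /= => /andP[sx xt].
      by rewrite lee_fin; apply: Hni; exact: ltW.
  have up : (\int[mu]_(x in `[s, t[) (H x)%:E <= (H s * (t - s))%:E)%E.
    rewrite EFinM -mst -integral_cst //; apply: ge0_le_integral => //.
    - by move=> x _; rewrite lee_fin; case/andP: (H01 x).
    - exact: mEH.
    - move=> x /=; rewrite in_itv /= => /andP[sx xt].
      by rewrite lee_fin; apply: Hni.
  have lo' : ((H t * (t - s) + c * H t)%:E <= (c * H s)%:E)%E.
    by rewrite -e EFinD; apply: leeD.
  have up' : ((c * H s)%:E <= (H s * (t - s) + c * H t)%:E)%E.
    by rewrite -e EFinD; apply: leeD.
  rewrite lee_fin in lo'; rewrite lee_fin in up'.
  apply/andP; split; lra.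
move=> t t0; split; [exact: Fbpos|exact: Gbpos|].
have := @expo_char _ H c c0 (fun x _ => H01 x) Hineq t t0.
by rewrite H0 mul1r.
Qed.
End S1.

Section S2.
Context {R : realType}.

Lemma dir (F G : R -> R) (a b c : R) :
  nonneg_abs_cont_cdf G -> 0 < a -> 0 < b -> 0 < c ->
  (forall t, 0 <= t -> 0 < survival G t) ->
  (forall t, 0 <= t -> survival F t `^ a * survival G t `^ b = expR (- (t / c))) ->
  is_exponential_cdf F -> is_exponential_cdf G.
Proof.
move=> hG a0 b0 c0 Gpos Hid [l [l0 Fe]].
have [G01 _ _ Gnz] := @cdf_props _ G hG.
have Fbe t : 0 <= t -> survival F t = expR (- (l * t)).
  by move=> t0; rewrite /survival Fe ltNge t0 /=; ring.
set m := (c^-1 - l * a) / b.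
have Gbe t : 0 <= t -> survival G t = expR (- (m * t)).
  move=> t0; have h := Hid t t0; rewrite Fbe // -expRM in h.
  have hb : survival G t `^ b = expR (- (t / c) + l * t * a).
    apply: (@mulfI _ (expR (- (l * t) * a))); first by rewrite gt_eqF ?expR_gt0.
    by rewrite h -expRD; congr expR; ring.
  have -> : survival G t = (survival G t `^ b) `^ b^-1.
    by rewrite -powRrM divff ?gt_eqF // powRr1 // ltW // Gpos.
  rewrite hb -expRM; congr expR; rewrite /m; field; rewrite ?gt_eqF // ?andbT.
exists ((c^-1 - l * a) / b); rewrite -/m; split.
  case: (ltrgt0P m) => [//|mneg|m0].
  - have := Gbe 1 ler01; have := G01 1; rewrite /survival => /andP[g0 _] e.
    have : 1 < expR (- (m * 1)) by rewrite expR_gt1 mulr1 oppr_gt0.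
    rewrite -e; lra.
  - exfalso; apply: Gnz => x x0; have := Gbe x x0.
    rewrite m0 mul0r oppr0 expR0 /survival; lra.
move=> x; case: ifP => [xneg|xpos].
  by case: hG => _; apply.
have x0 : 0 <= x by rewrite leNgt xpos.
have := Gbe x x0; rewrite /survival => <-; ring.
Qed.

End S2.

Theorem theorem3p1 (R : realType) (F G : R -> R) (alpha beta c : R) :
  nonneg_abs_cont_cdf F -> nonneg_abs_cont_cdf G ->
  0 < alpha -> 0 < beta -> 0 < c ->
  (forall t, 0 <= t -> Rab alpha beta (survival F) (survival G) t = c%:E) ->
  (is_exponential_cdf F <-> is_exponential_cdf G).
Proof.
move=> hF hG a0 b0 c0 hR.
have K := @key _ F G alpha beta c hF hG a0 b0 c0 hR.
split.
- apply: (@dir _ F G alpha beta c hG a0 b0 c0).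
  + by move=> t t0; case: (K t t0).
  + by move=> t t0; case: (K t t0).
- apply: (@dir _ G F beta alpha c hF b0 a0 c0).
  + by move=> t t0; case: (K t t0).
  + by move=> t t0; case: (K t t0) => _ _ <-; rewrite mulrC.
Qed.
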